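(* Let $\Gamma$ be a Neumaier graph of valency $k$ with diameter $2$. Then $\Gamma$ has at most $\max\{1+k+k(k-2),\,2k\}$ vertices.
   Context: All graphs are finite, simple, undirected and connected. A graph is edge-regular with parameters $(n,k,\lambda)$ if it has $n$ vertices, is $k$-regular, and any two adjacent vertices have exactly $\lambda$ common neighbours. A clique $C$ is a regular clique with nexus $a$ if every vertex not in $C$ has exactly $a$ neighbours in $C$. A Neumaier graph is a non-complete edge-regular graph containing a regular clique. *)

(* Defs.v *)
From mathcomp Require Import all_boot all_order.
Set Implicit Arguments. Unset Strict Implicit. Unset Printing Implicit Defensive.

Definition simple_graph (T : finType) (e : rel T) : Prop :=
  symmetric e /\ irreflexive e.

Definition connected_graph (T : finType) (e : rel T) : Prop :=
  forall x y : T, connect e x y.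

Definition nbhd (T : finType) (e : rel T) (x : T) : {set T} := [set y | e x y].

Definition regular_graph (T : finType) (e : rel T) (k : nat) : Prop :=
  forall x : T, #|nbhd e x| = k.

Definition edge_regular (T : finType) (e : rel T) (n k lam : nat) : Prop :=
  #|T| = n /\ regular_graph e k /\
  forall x y : T, e x y -> #|nbhd e x :&: nbhd e y| = lam.

Definition complete_graph (T : finType) (e : rel T) : Prop :=
  forall x y : T, x != y -> e x y.

Definition is_clique (T : finType) (e : rel T) (C : {set T}) : Prop :=
  forall x y, x \in C -> y \in C -> x != y -> e x y.

Definition regular_clique (T : finType) (e : rel T) (C : {set T}) (a : nat) : Prop :=
  is_clique e C /\ forall v, v \notin C -> #|C :&: nbhd e v| = a.

Definition neumaier (T : finType) (e : rel T) (k : nat) : Prop :=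
  simple_graph e /\ connected_graph e /\ ~ complete_graph e /\
  (exists lam, edge_regular e #|T| k lam) /\
  exists (C : {set T}) (a : nat), C != set0 /\ regular_clique e C a.

Definition dist_le2 (T : finType) (e : rel T) (x y : T) : Prop :=
  x = y \/ e x y \/ exists z, e x z /\ e z y.

Definition diameter2 (T : finType) (e : rel T) : Prop :=
  (forall x y : T, dist_le2 e x y) /\
  exists x y : T, x != y /\ ~~ e x y /\ dist_le2 e x y.

(* Main.v *)
Require Import Defs.
From mathcomp Require Import all_boot all_order.
Lemma card_bigcup_le {T : finType} (B : {set T}) (S : T -> {set T}) :
  #|\bigcup_(z in B) S z| <= \sum_(z in B) #|S z|.
Proof.
apply: (big_ind2 (fun (U : {set T}) n => #|U| <= n)).
- by rewrite cards0.
- move=> U1 n1 U2 n2 h1 h2.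
  case: (leq_card_setU U1 U2) => le _; apply: leq_trans le _; exact: leq_add.
- by [].
Qed.

Lemma cover_bound (T:finType) (A B : {set T}) (S : T -> {set T}) m :
  (forall y, y \notin A -> exists2 z, z \in B & y \in S z) ->
  (forall z, z \in B -> #|S z| <= m) ->
  #|T| <= #|A| + #|B| * m.
Proof.
move=> hc hm.
have sub : [set: T] \subset A :|: \bigcup_(z in B) S z.
  apply/subsetP=> y _; rewrite in_setU; case: (boolP (y \in A)) => //= yA.
  have [z zB yz] := hc y yA; apply/bigcupP; by exists z.
rewrite -cardsT; apply: leq_trans (subset_leq_card sub) _.
case: (leq_card_setU A (\bigcup_(z in B) S z)) => le _; apply: leq_trans le _; rewrite leq_add2l.
have := card_bigcup_le B S. move=> /leq_trans; apply.
rewrite -sum_nat_const; exact: leq_sum.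
Qed.

From mathcomp Require Import zify.
Lemma arith k m : 1 <= m <= k.+1 -> m + m * (k - (m - 1)) <= maxn (1 + k + k * (k - 2)) (2 * k).
Proof.
move=> /andP[h1 h2].
have E: m + m * (k - (m - 1)) = m * (k + 2 - m).
  have e1: k + 2 - m = (k - (m - 1)).+1 by lia.
  by rewrite e1 mulnS.
rewrite E; clear E.
have H: 4 * (m * (k + 2 - m)) <= (k+2)*(k+2).
  have kp : k + 2 = m + (k + 2 - m) by lia.
  move: (k + 2 - m) kp => p kp; rewrite kp.
  have L: forall a t, 4 * (a * (a + t)) <= (a + (a + t)) * (a + (a + t)) by move=> a t; nia.
  case: (leqP m p) => hmp.
    by rewrite -(subnKC hmp); apply: L.
  rewrite -(subnKC (ltnW hmp)); move: (m - p) => t.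
  by rewrite [X in 4 * X]mulnC [X in X * X]addnC; apply: L.
case: k h2 H => [|[|[|k]]] h2 H; try lia.
Qed.

Theorem lemma3p2 (T : finType) (e : rel T) (k : nat) :
  neumaier e k -> diameter2 e ->
  #|T| <= maxn (1 + k + k * (k - 2)) (2 * k).
Proof.
move=> [[esym eirr] [_ [ncomp [[lam [_ [reg _]]] [C [a [C0 [cl nex]]]]]]]] [d2 _].
have [c cC] := set0Pn _ C0.
case: (posnP a) => [a0|apos].
  exfalso; apply: ncomp.
  have noadj : forall y z, y \notin C -> z \in C -> ~~ e y z.
    move=> y z yC zC; apply/negP=> eyz.
    have := nex y yC; rewrite a0 => /eqP; rewrite cards_eq0 => /eqP h.
    have : z \in C :&: nbhd e y by rewrite inE zC inE eyz.
    by rewrite h inE.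
  have allC : forall y, y \in C.
    move=> y; apply/negPn/negP=> yC.
    case: (d2 c y) => [ecy|[cy|[z [cz zy]]]]; first by rewrite -ecy cC in yC.
      by move: (noadj _ _ yC cC); rewrite esym cy.
    case: (boolP (z \in C)) => zC.
      by move: (noadj _ _ yC zC); rewrite esym zy.
    by move: (noadj _ _ zC cC); rewrite esym cz.
  by move=> x y; apply: cl.
have bnd : #|T| <= #|C| + #|C| * (k - (#|C| - 1)).
  apply: cover_bound (fun z => nbhd e z :\: C) _ _ _.
    move=> y yC; have := nex y yC; move=> h.
    have : 0 < #|C :&: nbhd e y| by rewrite h.
    rewrite card_gt0 => /set0Pn [z]; rewrite !inE => /andP [zC eyz].
    by exists z => //; rewrite !inE yC /= esym.
  move=> z zC; rewrite cardsD reg.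
  apply: leq_sub2l.
  rewrite (cardsD1 z C) zC add1n subn1 /=.
  apply: subset_leq_card; apply/subsetP=> w; rewrite !inE => /andP [wz wC].
  by rewrite wC cl // eq_sym.
apply: leq_trans bnd _; apply: arith.
rewrite card_gt0 C0 /=.
have : #|C :\ c| <= #|nbhd e c|.
  apply: subset_leq_card; apply/subsetP=> w; rewrite !inE => /andP [wz wC].
  by rewrite cl // eq_sym.
by rewrite reg (cardsD1 c C) cC.
Qed.
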